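(* Let $t\geq 4$ with $t\equiv 0\pmod 4$. Then the multiset $\{1,2^b,t^c\}$ admits a linear realization for every integer $b\geq t-2$ and every positive odd integer $c$.
   Context: $\{1,2^b,t^{c}\}$ is the multiset with one $1$, $b$ copies of $2$ and $c$ copies of $t$. For a multiset $L$ of positive integers with $|L|=v-1$, each at most $v-1$, a linear realization of $L$ is a Hamiltonian path $[x_0,\dots,x_{v-1}]$ of the complete graph on $\{0,\dots,v-1\}$ such that the multiset $\{|x_i-x_{i+1}| : i=0,\dots,v-2\}$ equals $L$. *)

(* Defs.v *)
From mathcomp Require Import all_boot.
Set Implicit Arguments. Unset Strict Implicit. Unset Printing Implicit Defensive.

Definition absdiff (m n : nat) : nat := if m <= n then n - m else m - n.

Definition path_diffs (s : seq nat) : seq nat :=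
  [seq absdiff p.1 p.2 | p <- zip s (behead s)].

(* A linear realization of the multiset L (a seq nat up to permutation) on
   vertex set {0,...,v-1}: a Hamiltonian path of K_v, i.e. an ordering s of
   {0,..,v-1}, whose multiset of edge lengths equals L. *)
Definition linear_realization (v : nat) (L : seq nat) (s : seq nat) : Prop :=
  perm_eq s (iota 0 v) /\ perm_eq (path_diffs s) L.

Definition ms_1_2_t (b t c : nat) : seq nat := 1 :: nseq b 2 ++ nseq c t.

(* Main.v *)
Require Import Defs.
From mathcomp Require Import all_boot zify.


Lemma absdiffC x y : absdiff x y = absdiff y x.
Proof. rewrite /absdiff; case: (leqP x y); case: (leqP y x); lia. Qed.

Lemma absdiff_add x d : absdiff x (x + d) = d.
Proof. rewrite /absdiff; case: leqP; lia. Qed.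

Lemma pd_cons2 x y s : path_diffs [:: x, y & s] = absdiff x y :: path_diffs (y :: s).
Proof. by []. Qed.

Lemma pd_cat x s1 y s2 :
  path_diffs ((x :: s1) ++ (y :: s2)) =
  path_diffs (x :: s1) ++ absdiff (last x s1) y :: path_diffs (y :: s2).
Proof.
elim: s1 x => [|z s1 IH] x //.
by rewrite cat_cons cat_cons pd_cons2 -cat_cons IH pd_cons2.
Qed.

Lemma pd_rev s : path_diffs (rev s) = rev (path_diffs s).
Proof.
elim: s => [|x s' IH] //.
case: s' IH => [|y s''] IH //.
rewrite pd_cons2 rev_cons (rev_cons (absdiff x y)) -IH.
case E: (rev (y :: s'')) => [|z w].
  by move: (size_rev (y :: s'')); rewrite E.
rewrite -cats1 pd_cat -cats1.
have -> : last z w = y.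
  have -> : last z w = last x (z :: w) by [].
  by rewrite -E rev_cons last_rcons.
by rewrite absdiffC.
Qed.

Lemma size_pd s : size (path_diffs s) = (size s).-1.
Proof. rewrite /path_diffs size_map size_zip size_behead; lia. Qed.

Lemma pd_map f s (Hf : forall x y, absdiff (f x) (f y) = 2 * absdiff x y) :
  path_diffs (map f s) = map (fun d => 2 * d) (path_diffs s).
Proof. elim: s => [|x [|y s] IH] //. by rewrite map_cons map_cons pd_cons2 -map_cons IH Hf. Qed.

Lemma pd_iota_step f d a n (Hf : forall j, f j.+1 = f j + d) :
  path_diffs (map f (iota a n)) = nseq n.-1 d.
Proof.
elim: n a => [|[|n] IH] a //.
rewrite /= in IH *. by rewrite pd_cons2 -/(iota _ _) -map_cons -/(iota a.+1 n.+1) IH Hf absdiff_add.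
Qed.


Definition Lc (h Q r k : nat) := if k < r then Q.+1 else Q.
Definition chain h Q r k := [seq k + h * j | j <- iota 0 (Lc h Q r k)].
Definition top h Q r k := k + h * (Lc h Q r k).-1.

Lemma Lc_spec h Q r k j : 0 < h -> r < h -> k < h ->
  (j < Lc h Q r k) = (k + h * j < Q * h + r).
Proof.
move=> h0 rh kh; rewrite /Lc; case: (ltnP k r) => kr; apply/idP/idP => H5; nia.
Qed.

Lemma Lc_pos h Q r k : 0 < Q -> 0 < Lc h Q r k.
Proof. by rewrite /Lc; case: (k < r). Qed.

Lemma mem_chain h Q r k x : 0 < h -> r < h -> k < h ->
  (x \in chain h Q r k) = (x < Q * h + r) && (x %% h == k).
Proof.
move=> h0 rh kh; apply/mapP/andP.
  move=> [j]; rewrite mem_iota add0n Lc_spec // => jl ->; split => //.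
  by rewrite addnC mulnC modnMDl modn_small.
move=> [xM /eqP xk]; exists (x %/ h).
  rewrite mem_iota add0n Lc_spec //.
  move: xM; rewrite {1}(divn_eq x h) xk mulnC addnC; set y := x %/ h; lia.
by rewrite {1}(divn_eq x h) xk mulnC addnC.
Qed.

Lemma uniq_chain h Q r k : 0 < h -> uniq (chain h Q r k).
Proof.
move=> h0; rewrite map_inj_uniq ?iota_uniq // => a b /eqP.
by rewrite eqn_add2l eqn_pmul2l // => /eqP.
Qed.

Lemma pd_chain h Q r k : path_diffs (chain h Q r k) = nseq (Lc h Q r k).-1 h.
Proof. apply: pd_iota_step => j; lia. Qed.

Lemma last_map_iota (f : nat -> nat) a n x0 : last x0 (map f (iota a n.+1)) = f (a + n).
Proof.
elim: n a => [|n IH] a; first by rewrite addn0.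
have := IH a.+1; rewrite /= => ->; by rewrite addSnnS.
Qed.

Lemma head_chain h Q r k : 0 < Q -> head 0 (chain h Q r k) = k.
Proof.
move=> Q0; rewrite /chain; case: (Lc h Q r k) (@Lc_pos h Q r k Q0) => //= n _; lia.
Qed.

Lemma last_chain h Q r k : 0 < Q -> last 0 (chain h Q r k) = top h Q r k.
Proof.
move=> Q0; rewrite /chain /top; case: (Lc h Q r k) (@Lc_pos h Q r k Q0) => // n _.
by rewrite last_map_iota.
Qed.

Lemma top_lt h Q r k : 0 < h -> r < h -> k < h -> 0 < Q -> top h Q r k < Q * h + r.
Proof. move=> *; rewrite /top /Lc; case: (ltnP k r) => kr; nia. Qed.

Lemma top_mod h Q r k : 0 < h -> k < h -> top h Q r k %% h = k.
Proof. by move=> *; rewrite /top addnC mulnC modnMDl modn_small. Qed.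

Lemma top_good h Q r k : 0 < h -> r < h -> k < h -> 0 < Q ->
  (top h Q r k + 1 < Q * h + r) = (k.+1 %% h != r).
Proof.
move=> h0 rh kh Q0; rewrite /top /Lc.
case: (ltnP k.+1 h) => k1.
  rewrite modn_small //; case: (ltnP k r) => kr; apply/idP/idP; nia.
have kh1 : k.+1 = h by lia.
have -> : k.+1 %% h = 0 by rewrite kh1 modnn.
case: (ltnP k r) => kr; [lia|]; apply/idP/idP; nia.
Qed.

Lemma top_next h Q r k : 0 < h -> r < h -> k < h -> 0 < Q ->
  top h Q r k + 1 < Q * h + r -> top h Q r (k.+1 %% h) = top h Q r k + 1.
Proof.
move=> h0 rh kh Q0; rewrite /top /Lc.
case: (ltnP k.+1 h) => k1.
  rewrite modn_small //; case: (ltnP k r) => kr; case: (ltnP k.+1 r) => k1r; nia.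
have kh1 : k.+1 = h by lia.
have -> : k.+1 %% h = 0 by rewrite kh1 modnn.
case: (ltnP k r) => kr; case: (ltnP 0 r) => r0; nia.
Qed.

Lemma top_last h Q r k : 0 < h -> r < h -> k < h -> 0 < Q ->
  ~~ (top h Q r k + 1 < Q * h + r) -> top h Q r k = (Q * h + r).-1.
Proof. move=> h0 rh kh Q0 H1; have := @top_lt h Q r k h0 rh kh Q0; lia. Qed.


Lemma pd_cat0 s1 s2 : s1 != [::] -> s2 != [::] ->
  path_diffs (s1 ++ s2) = path_diffs s1 ++ absdiff (last 0 s1) (head 0 s2) :: path_diffs s2.
Proof. by case: s1 => // x s1; case: s2 => // y s2 _ _; rewrite pd_cat. Qed.

Lemma last_rev0 (s : seq nat) : last 0 (rev s) = head 0 s.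
Proof. by case: s => //= x s; rewrite rev_cons last_rcons. Qed.

Lemma head_rev0 (s : seq nat) : head 0 (rev s) = last 0 s.
Proof. by rewrite -{2}(revK s) last_rev0. Qed.

Lemma head_cat0 (s1 s2 : seq nat) : s1 != [::] -> head 0 (s1 ++ s2) = head 0 s1.
Proof. by case: s1. Qed.

Lemma last_cat0 (s1 s2 : seq nat) : s2 != [::] -> last 0 (s1 ++ s2) = last 0 s2.
Proof. by case: s2 => // y s2 _; rewrite last_cat. Qed.

Definition ins h d := (d == 1) || (d == h).

Definition blk h Q r p := rev (chain h Q r (2 * p)) ++ chain h Q r (2 * p).+1.

Lemma chain_nil h Q r k : 0 < Q -> chain h Q r k != [::].
Proof. by move=> Q0; rewrite -size_eq0 size_map size_iota -lt0n Lc_pos. Qed.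

Lemma mem_blk h Q r H p x : h = 2 * H -> r < h -> p < H ->
  (x \in blk h Q r p) = (x < Q * h + r) && ((x %% h) %/ 2 == p).
Proof.
move=> hH rh pH; have h0 : 0 < h by lia.
have k1 : 2 * p < h by lia.
have k2 : (2 * p).+1 < h by lia.
rewrite mem_cat mem_rev !mem_chain //.
have := ltn_pmod x h0; set y := x %% h => yh.
case: (x < Q * h + r) => //=.
apply/idP/idP; lia.
Qed.

Lemma uniq_blk h Q r H p : h = 2 * H -> r < h -> p < H -> uniq (blk h Q r p).
Proof.
move=> hH rh pH; have h0 : 0 < h by lia.
have k1 : 2 * p < h by lia.
have k2 : (2 * p).+1 < h by lia.
rewrite cat_uniq rev_uniq !uniq_chain //= andbT; apply/hasPn => x.
rewrite mem_rev !mem_chain // => /andP [_ /eqP ->].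
apply/negP => /andP [_ /eqP]; lia.
Qed.

Lemma pd_blk h Q r H p : h = 2 * H -> p < H -> 0 < Q ->
  all (ins h) (path_diffs (blk h Q r p)) /\ count (pred1 1) (path_diffs (blk h Q r p)) = 1.
Proof.
move=> hH pH Q0; rewrite /blk pd_cat0; last 2 first.
- by rewrite -size_eq0 size_rev size_eq0 chain_nil.
- by rewrite chain_nil.
rewrite pd_rev !pd_chain last_rev0 !head_chain // rev_nseq.
have -> : absdiff (2 * p) (2 * p).+1 = 1 by rewrite /absdiff leqnSn subSnn.
rewrite all_cat /= !all_nseq /ins eqxx orbT /= !orbT.
rewrite count_cat /= !count_nseq /=.
have -> : (h == 1) = false by apply/eqP; lia.
by rewrite !mul0n.
Qed.

Lemma blk_nil h Q r p : 0 < Q -> blk h Q r p != [::].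
Proof. by move=> Q0; rewrite -size_eq0 size_cat size_rev addn_eq0 size_eq0 negb_and chain_nil ?orbT. Qed.

Lemma head_blk h Q r p : 0 < Q -> head 0 (blk h Q r p) = top h Q r (2 * p).
Proof.
move=> Q0; rewrite /blk head_cat0 ?head_rev0 ?last_chain //.
by rewrite -size_eq0 size_rev size_eq0 chain_nil.
Qed.

Lemma last_blk h Q r p : 0 < Q -> last 0 (blk h Q r p) = top h Q r (2 * p).+1.
Proof. by move=> Q0; rewrite /blk last_cat0 ?last_chain ?chain_nil. Qed.

Fixpoint sn h Q r H p n :=
  if n is n'.+1 then blk h Q r (p %% H) ++ sn h Q r H p.+1 n' else [::].

Lemma sn_nil h Q r H p n : 0 < Q -> sn h Q r H p n.+1 != [::].
Proof.
move=> Q0 /=; rewrite -size_eq0 size_cat addn_eq0 negb_and size_eq0 blk_nil //.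
Qed.

Lemma head_sn h Q r H p n : 0 < Q -> head 0 (sn h Q r H p n.+1) = top h Q r (2 * (p %% H)).
Proof. by move=> Q0 /=; rewrite head_cat0 ?blk_nil ?head_blk. Qed.

Lemma last_sn h Q r H p n : 0 < Q ->
  last 0 (sn h Q r H p n.+1) = top h Q r (2 * ((p + n) %% H)).+1.
Proof.
move=> Q0; elim: n p => [|n IH] p.
  by rewrite /= cats0 last_blk // addn0.
rewrite [sn _ _ _ _ _ _]/= last_cat0; last by rewrite -/(sn h Q r H p.+1 n.+1) sn_nil.
by rewrite -/(sn h Q r H p.+1 n.+1) IH addSnnS.
Qed.

Lemma mod2H H m : 0 < H -> (2 * (m %% H)).+2 %% (2 * H) = 2 * (m.+1 %% H).
Proof.
move=> H0; have -> : (2 * (m %% H)).+2 = 2 * (m %% H).+1 by lia.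
rewrite -muln_modr; congr (2 * _); by rewrite -addn1 modnDml addn1.
Qed.

Lemma pd_sn h Q r H p n : h = 2 * H -> 0 < H -> r < h -> 0 < Q ->
  (forall j, j < n -> top h Q r (2 * ((p + j) %% H)).+1 + 1 < Q * h + r) ->
  all (ins h) (path_diffs (sn h Q r H p n.+1)) /\
  count (pred1 1) (path_diffs (sn h Q r H p n.+1)) = (2 * n).+1.
Proof.
move=> hH H0 rh Q0; elim: n p => [|n IH] p Hj.
  have pH : p %% H < H by rewrite ltn_pmod.
  by rewrite /= cats0; exact: (@pd_blk h Q r H (p %% H) hH pH Q0).
rewrite [sn _ _ _ _ _ _]/= -/(sn h Q r H p.+1 n.+1).
have pH : p %% H < H by rewrite ltn_pmod.
rewrite pd_cat0 ?blk_nil ?sn_nil // head_sn // last_blk //.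
have J := Hj 0 (ltn0Sn n); rewrite addn0 in J.
have -> : top h Q r (2 * (p.+1 %% H)) = top h Q r (2 * (p %% H)).+1 + 1.
  have h0 : 0 < h by lia.
  have kk : (2 * (p %% H)).+1 < h by lia.
  rewrite -(@top_next h Q r _ h0 rh kk Q0 J).
  by rewrite [in X in _ = top _ _ _ X]hH mod2H.
rewrite absdiff_add.
have [A1 C1] := @pd_blk h Q r H (p %% H) hH pH Q0.
have [A2 C2] : all (ins h) (path_diffs (sn h Q r H p.+1 n.+1)) /\
  count (pred1 1) (path_diffs (sn h Q r H p.+1 n.+1)) = (2 * n).+1.
  apply: IH => j jn; rewrite addSnnS; apply: Hj; lia.
rewrite all_cat /= A1 A2 count_cat /= C1 C2; split => //; lia.
Qed.

Lemma mem_sn h Q r H p n x : h = 2 * H -> 0 < H -> r < h ->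
  (x \in sn h Q r H p n) = (x < Q * h + r) && has (fun j => (x %% h) %/ 2 == (p + j) %% H) (iota 0 n).
Proof.
move=> hH H0 rh; elim: n p => [|n IH] p; first by rewrite andbF.
rewrite /= mem_cat IH (@mem_blk h Q r H) ?ltn_pmod // addn0.
rewrite -[iota 1 n]/(iota (1 + 0) n) iotaDl has_map.
case: (x < Q * h + r) => //=; congr (_ || _); apply: eq_has => j /=.
by rewrite addnA addn1.
Qed.

Lemma mod_neq H p i : 0 < i < H -> (p + i) %% H != p %% H.
Proof.
move=> /andP [i0 iH]; apply/negP => /eqP E.
have : (p + i == p + 0 %[mod H]) by rewrite addn0 E.
by rewrite eqn_modDl mod0n modn_small //; move/eqP; lia.
Qed.

Lemma uniq_sn h Q r H p n : h = 2 * H -> 0 < H -> r < h -> n <= H -> uniq (sn h Q r H p n).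
Proof.
move=> hH H0 rh; elim: n p => [|n IH] p nH //.
rewrite /= cat_uniq (@uniq_blk h Q r H) ?ltn_pmod // IH ?andbT; last by lia.
apply/hasPn => x; rewrite (@mem_sn h Q r H) // => /andP [_ /hasP [j]].
rewrite mem_iota add0n => jn /eqP E.
rewrite (@mem_blk h Q r H) ?ltn_pmod // E negb_and orbC.
rewrite -addn1 addnAC -addnA (@mod_neq H p) //; lia.
Qed.

Lemma perm_sn h Q r H p : h = 2 * H -> 0 < H -> r < h ->
  perm_eq (sn h Q r H p H) (iota 0 (Q * h + r)).
Proof.
move=> hH H0 rh; apply: uniq_perm; rewrite ?iota_uniq ?uniq_sn //.
move=> x; rewrite mem_iota add0n (@mem_sn h Q r H) //.
case xM : (x < Q * h + r) => //=.
set q := (x %% h) %/ 2.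
have qH : q < H by rewrite /q; have := ltn_pmod x (_ : 0 < h); lia.
apply/hasP; exists ((q + H - p %% H) %% H).
  by rewrite mem_iota add0n ltn_pmod.
rewrite modnDmr {1}(divn_eq p H) -addnA modnMDl.
have pH := ltn_pmod p H0.
have -> : p %% H + (q + H - p %% H) = q + H by lia.
by rewrite modnDr modn_small.
Qed.


Definition S H M :=
  let h := 2 * H in let Q := M %/ h in let r := M %% h in
  if odd r then rev (sn h Q r H r./2 H) else sn h Q r H r./2 H.

Lemma S_props H M : 0 < H -> 2 * H <= M ->
  [/\ perm_eq (S H M) (iota 0 M), last 0 (S H M) = M.-1,
      all (ins (2 * H)) (path_diffs (S H M)) &
      count (pred1 1) (path_diffs (S H M)) = (2 * H).-1].
Proof.
move=> H0 hM; rewrite /S.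
set h := 2 * H; set Q := M %/ h; set r := M %% h.
have hH : h = 2 * H by [].
have h0 : 0 < h by lia.
have rh : r < h by rewrite ltn_pmod.
have EM : M = Q * h + r by rewrite /Q /r -divn_eq.
have Q0 : 0 < Q by rewrite /Q divn_gt0.
set p0 := r./2.
have p0H : p0 < H by rewrite /p0; lia.
have p0m : p0 %% H = p0 by rewrite modn_small.
have HH : H.-1.+1 = H by lia.
have Hs : (2 * H).-1 = (2 * H.-1).+1 by lia.
have perm0 : perm_eq (sn h Q r H p0 H) (iota 0 M) by rewrite EM perm_sn.
case: ifP => rodd.
- have Hyp : forall j, j < H.-1 -> top h Q r (2 * ((p0 + j) %% H)).+1 + 1 < Q * h + r.
    move=> j jH.
    have kh : (2 * ((p0 + j) %% H)).+1 < h by have := ltn_pmod (p0 + j) H0; lia.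
    rewrite top_good //.
    rewrite hH mod2H //; apply/eqP => E; move: rodd; rewrite -E; lia.
  have [A C] := @pd_sn h Q r H p0 H.-1 hH H0 rh Q0 Hyp.
  rewrite HH in A C.
  split.
  + by rewrite perm_rev.
  + have := @head_sn h Q r H p0 H.-1 Q0; rewrite HH => HS.
    rewrite last_rev0 HS p0m /top /Lc.
    have -> : 2 * p0 < r by rewrite /p0; lia.
    rewrite EM /=; lia.
  + by rewrite pd_rev all_rev.
  + by rewrite pd_rev count_rev C Hs.
- have Hyp : forall j, j < H.-1 -> top h Q r (2 * ((p0 + j) %% H)).+1 + 1 < Q * h + r.
    move=> j jH.
    have kh : (2 * ((p0 + j) %% H)).+1 < h by have := ltn_pmod (p0 + j) H0; lia.
    rewrite top_good //.
    rewrite hH mod2H //.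
    have -> : r = 2 * (p0 %% H) by rewrite p0m /p0; lia.
    rewrite eqn_pmul2l // -addn1 addnAC -addnA (@mod_neq H p0) //; lia.
  have [A C] := @pd_sn h Q r H p0 H.-1 hH H0 rh Q0 Hyp.
  rewrite HH in A C.
  split => //.
  have := @last_sn h Q r H p0 H.-1 Q0; rewrite HH => ->.
  have kh : (2 * ((p0 + H.-1) %% H)).+1 < h by have := ltn_pmod (p0 + H.-1) H0; lia.
  rewrite EM top_last //.
  rewrite top_good // hH mod2H // -addnS HH modnDr p0m negbK /p0.
  apply/eqP; lia.
by rewrite C hH Hs.
Qed.

Definition P H M m := S H M ++ iota M (m - M).

Lemma pd_iota a n : path_diffs (iota a n) = nseq n.-1 1.
Proof. by rewrite -(map_id (iota a n)) (@pd_iota_step id 1) // => j; rewrite addn1. Qed.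

Lemma P_props H M m : 0 < H -> 2 * H <= M -> M <= m ->
  [/\ perm_eq (P H M m) (iota 0 m), last 0 (P H M m) = m.-1,
      all (ins (2 * H)) (path_diffs (P H M m)) &
      count (pred1 1) (path_diffs (P H M m)) = (2 * H).-1 + (m - M)].
Proof.
move=> H0 hM Mm; have [pe la al co] := @S_props H M H0 hM.
rewrite /P.
case E: (m - M) => [|n].
  rewrite cats0 addn0; have -> : m = M by lia.
  by split.
have Snil : S H M != [::].
  by rewrite -size_eq0 (perm_size pe) size_iota; lia.
split.
- by rewrite -(subnKC Mm) iotaD add0n E perm_cat2r.
- have LI : last 0 (iota M n.+1) = M + n.
    by rewrite -(map_id (iota M n.+1)) last_map_iota.
  rewrite last_cat0 // LI; lia.
- have AD : absdiff M.-1 M = 1 by rewrite /absdiff; case: leqP; lia.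
  by rewrite pd_cat0 // la pd_iota all_cat al /= all_nseq /ins /= AD orbT.
- rewrite pd_cat0 // la pd_iota count_cat co /= count_nseq /=.
  have -> : absdiff M.-1 M = 1 by rewrite /absdiff; case: leqP; lia.
  rewrite /=; lia.
Qed.


Lemma count_two (h : nat) (l : seq nat) : h != 1 -> all (ins h) l ->
  count (pred1 1) l + count (pred1 h) l = size l.
Proof.
move=> h1; elim: l => [|x l IH] //= /andP [/orP [] /eqP -> /IH <-].
  rewrite eqxx eq_sym (negbTE h1) /=; lia.
rewrite eqxx (negbTE h1) /=; lia.
Qed.

Lemma count3 (a : pred nat) (t : nat) (l : seq nat) : t != 1 -> t != 2 ->
  all (fun d => (d == 1) || (d == 2) || (d == t)) l ->
  count a l = a 1 * count (pred1 1) l + a 2 * count (pred1 2) l + a t * count (pred1 t) l.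
Proof.
move=> t1 t2; elim: l => [|x l IH] //=; first by rewrite !muln0.
move=> /andP [/orP [/orP []|] /eqP -> /IH ->].
- rewrite eqxx /= eq_sym (negbTE t1); lia.
- rewrite eqxx /= eq_sym (negbTE t2); lia.
- rewrite eqxx /= (negbTE t1) (negbTE t2); lia.
Qed.

Lemma final_perm (t b c : nat) (l : seq nat) : t != 1 -> t != 2 ->
  all (fun d => (d == 1) || (d == 2) || (d == t)) l ->
  count (pred1 1) l = 1 -> count (pred1 2) l = b -> count (pred1 t) l = c ->
  perm_eq l (1 :: nseq b 2 ++ nseq c t).
Proof.
move=> t1 t2 Al C1 C2 Ct; apply/permP => a.
rewrite (@count3 a t l t1 t2 Al) C1 C2 Ct /= count_cat !count_nseq; lia.
Qed.

Lemma last_map0 f (s : seq nat) : s != [::] -> last 0 (map f s) = f (last 0 s).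
Proof. by case: s => //= x s _; rewrite last_map. Qed.

Lemma absdiff2 x y : absdiff (2 * x) (2 * y) = 2 * absdiff x y.
Proof. rewrite /absdiff leq_mul2l /=; case: leqP; lia. Qed.

Lemma absdiff21 x y : absdiff (2 * x).+1 (2 * y).+1 = 2 * absdiff x y.
Proof. rewrite /absdiff ltnS leq_mul2l /=; case: leqP; lia. Qed.

Lemma countt_half (H : nat) (l : seq nat) m M : 0 < H -> all (ins (2 * H)) l ->
  size l = m.-1 -> count (pred1 1) l = (2 * H).-1 + (m - M) ->
  count (pred1 (2 * H)) l = m.-1 - ((2 * H).-1 + (m - M)).
Proof.
move=> H0 Al Sz C1; have := @count_two (2 * H) l _ Al; rewrite C1 Sz.
move=> E; have h1 : 2 * H != 1 by lia.
have := E h1; lia.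
Qed.

Lemma cnt_map1 (l : seq nat) : count (pred1 1) (map (fun x => 2 * x) l) = 0.
Proof. by elim: l => //= x l ->; rewrite addn0; apply/eqP; rewrite eqb0; apply/eqP; lia. Qed.

Lemma cnt_map2 (l : seq nat) : count (pred1 2) (map (fun x => 2 * x) l) = count (pred1 1) l.
Proof.
elim: l => //= x l ->; congr (_ + _); congr (nat_of_bool _).
by apply/idP/idP => /eqP ?; apply/eqP; lia.
Qed.

Lemma cnt_mapt h (l : seq nat) : count (pred1 (2 * h)) (map (fun x => 2 * x) l) = count (pred1 h) l.
Proof.
elim: l => //= x l ->; congr (_ + _); congr (nat_of_bool _).
by rewrite eqn_pmul2l.
Qed.

Lemma arith_final H b c MA MB mA mB v :
  0 < H -> 4 * H - 2 <= b -> c = (c./2).*2.+1 -> v = b + c + 2 ->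
  MB = 2 * H + c./2 -> MA = MB.+1 -> mA = v - v./2 -> mB = v./2 ->
  (((2 * H).-1 + (mA - MA)) + ((2 * H).-1 + (mB - MB)) = b) /\
  ((mA.-1 - ((2 * H).-1 + (mA - MA))) + (mB.-1 - ((2 * H).-1 + (mB - MB))) = c).
Proof. move=> *; subst; split; lia. Qed.

Theorem proposition3p10 (t b c : nat) :
  4 <= t -> t %% 4 = 0 -> t - 2 <= b -> odd c ->
  exists s : seq nat,
    linear_realization (size (ms_1_2_t b t c)).+1 (ms_1_2_t b t c) s.
Proof.
move=> t4 tm tb co.
set H := t %/ 4.
have Ht : t = 4 * H by rewrite {1}(divn_eq t 4) tm addn0 mulnC.
have H0 : 0 < H by lia.
have ht2 : 2 * (2 * H) = t by rewrite Ht mulnA.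
have t1 : (1 == t) = false by apply/eqP; lia.
have tb' : 4 * H - 2 <= b by rewrite -Ht.
have Hsz : (size (ms_1_2_t b t c)).+1 = b + c + 2.
  by rewrite /ms_1_2_t /= size_cat !size_nseq; lia.
rewrite Hsz.
have oc : c = (c./2).*2.+1 by have := odd_double_half c; rewrite co; lia.
set v := b + c + 2.
set MB := 2 * H + c./2.
set MA := MB.+1.
set mA := v - v./2.
set mB := v./2.
have hA1 : 2 * H <= MA by lia.
have hA2 : MA <= mA by lia.
have hB1 : 2 * H <= MB by lia.
have hB2 : MB <= mB by lia.
have [peA laA alA coA] := @P_props H MA mA H0 hA1 hA2.
have [peB laB alB coB] := @P_props H MB mB H0 hB1 hB2.
set PA := P H MA mA in peA laA alA coA *.
set PB := P H MB mB in peB laB alB coB *.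
have nA : PA != [::] by rewrite -size_eq0 (perm_size peA) size_iota; lia.
have nB : PB != [::] by rewrite -size_eq0 (perm_size peB) size_iota; lia.
exists (map (fun x => 2 * x) PA ++ rev (map (fun x => (2 * x).+1) PB)).
split.
- apply: uniq_perm; last first.
  + move=> x; rewrite mem_cat mem_rev mem_iota add0n; apply/idP/idP.
      case/orP => /mapP [y]; rewrite ?(perm_mem peA) ?(perm_mem peB) mem_iota add0n => yl ->; lia.
    move=> xv; have [e|o] : x = 2 * x./2 \/ x = (2 * x./2).+1 by lia.
      apply/orP; left; apply/mapP; exists x./2 => //; rewrite (perm_mem peA) mem_iota; lia.
    apply/orP; right; apply/mapP; exists x./2 => //; rewrite (perm_mem peB) mem_iota; lia.
  + exact: iota_uniq.
  + rewrite cat_uniq rev_uniq !map_inj_uniq ?(perm_uniq peA) ?(perm_uniq peB) ?iota_uniq //=.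
    * rewrite andbT; apply/hasPn => x; rewrite mem_rev => /mapP [y _ ->]; apply/negP => /mapP [z _]; lia.
    * by move=> ? ? /succn_inj /eqP; rewrite eqn_pmul2l // => /eqP.
    * by move=> ? ? /eqP; rewrite eqn_pmul2l // => /eqP.
- have nA' : map (fun x => 2 * x) PA != [::] by rewrite -size_eq0 size_map size_eq0.
  have nB' : rev (map (fun x => (2 * x).+1) PB) != [::]
    by rewrite -size_eq0 size_rev size_map size_eq0.
  rewrite pd_cat0 // head_rev0 !last_map0 // laA laB pd_rev.
  rewrite (@pd_map (fun x => 2 * x)); last by move=> x y; exact: absdiff2.
  rewrite (@pd_map (fun x => (2 * x).+1)); last by move=> x y; exact: absdiff21.
  have J : absdiff (2 * mA.-1) (2 * mB.-1).+1 = 1 by rewrite /absdiff; case: leqP; lia.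
  rewrite J.
  have szA : size (path_diffs PA) = mA.-1 by rewrite size_pd (perm_size peA) size_iota.
  have szB : size (path_diffs PB) = mB.-1 by rewrite size_pd (perm_size peB) size_iota.
  have ctA := @countt_half H _ mA MA H0 alA szA coA.
  have ctB := @countt_half H _ mB MB H0 alB szB coB.
  apply: final_perm.
  + lia.
  + lia.
  + rewrite all_cat /= all_rev.
    apply/andP; split; apply/allP => d /mapP [e el ->].
      move: (allP alA e el); rewrite /ins => /orP [] /eqP ->; first by [].
      by rewrite ht2 eqxx !orbT.
    move: (allP alB e el); rewrite /ins => /orP [] /eqP ->; first by [].
    by rewrite ht2 eqxx !orbT.
  + by rewrite count_cat /= count_rev !cnt_map1.
  + have [A1 A2] := @arith_final H b c MA MB mA mB v H0 tb' oc erefl erefl erefl erefl erefl.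
    by rewrite count_cat /= count_rev !cnt_map2 coA coB -A1 add0n.
  + have [B1 B2] := @arith_final H b c MA MB mA mB v H0 tb' oc erefl erefl erefl erefl erefl.
    by rewrite count_cat /= count_rev -ht2 !cnt_mapt ctA ctB ht2 t1 -B2 add0n.
Qed.
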